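(* Let $Z=\prod_{c=1}^C Z_c$ with each $Z_c$ finite, let $Z^{\text{train}}\subseteq Z$, and let $z\mapsto x(z)$ be a representation whose kernel $K$ is compositionally structured. Let $f$ be a kernel model of the form $f(x)=\sum_{z^{\text{tr}}\in Z^{\text{train}}} a_{z^{\text{tr}}}K(x,x(z^{\text{tr}}))$ with arbitrary real coefficients $a_{z^{\text{tr}}}$. For $z\in Z$ define $$\mathrm{Conj}(z\mid Z^{\text{train}}):=\{J\subseteq\{1,\dots,C\}:\ \text{there is } z^{\text{tr}}\in Z^{\text{train}} \text{ with } z_c=z^{\text{tr}}_c \text{ for all } c\in J\}.$$ Then there exist functions $f_J:\prod_{c\in J}Z_c\to\mathbb{R}$, for $J\subseteq\{1,\dots,C\}$, such that for every input $x$ representing any $z\in Z$, $$f(x)=\sum_{J\in\mathrm{Conj}(z\mid Z^{\text{train}})} f_J(z_J),\qquad z_J:=(z_c)_{c\in J}.$$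
   Context: A representation $z\mapsto x(z)\in\mathbb{R}^d$ (or more generally a feature map with kernel $K(x,x')=\phi(x)^T\phi(x')$) is compositionally structured iff $K(x(z),x(z'))$ depends only on the number of components $c$ with $z_c=z'_c$. A kernel model trained on inputs representing $Z^{\text{train}}$ is written in dual form as a linear combination of the kernel evaluated against the training inputs. *)

(* Defs.v *)
From HB Require Import structures.
From mathcomp Require Import all_boot all_order all_algebra.
From mathcomp Require Import reals.
Set Implicit Arguments. Unset Strict Implicit. Unset Printing Implicit Defensive.
Import Order.TTheory GRing.Theory Num.Theory.
Local Open Scope ring_scope.

Definition prodZ (C : nat) (Zc : 'I_C -> finType) : finType :=
  {dffun forall c : 'I_C, Zc c}.

Definition feat_kernel (R : realType) (X : Type) (d : nat)
  (phi : X -> 'cV[R]_d) (x x' : X) : R :=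
  ((phi x)^T *m phi x') 0 0.

Definition nagree (C : nat) (Zc : 'I_C -> finType) (z z' : prodZ Zc) : nat :=
  #|[set c : 'I_C | z c == z' c]|.

Definition comp_structured (R : realType) (C : nat) (Zc : 'I_C -> finType)
  (X : Type) (K : X -> X -> R) (xrep : prodZ Zc -> X) : Prop :=
  exists g : nat -> R, forall z z' : prodZ Zc, K (xrep z) (xrep z') = g (nagree z z').

Definition kernel_model (R : realType) (C : nat) (Zc : 'I_C -> finType)
  (X : Type) (K : X -> X -> R) (xrep : prodZ Zc -> X)
  (Ztrain : {set prodZ Zc}) (a : prodZ Zc -> R) (x : X) : R :=
  \sum_(zt in Ztrain) a zt * K x (xrep zt).

Definition Conj (C : nat) (Zc : 'I_C -> finType) (z : prodZ Zc)
  (Ztrain : {set prodZ Zc}) : {set {set 'I_C}} :=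
  [set J : {set 'I_C} | [exists zt in Ztrain, [forall c in J, z c == zt c]]].

Definition subprod (C : nat) (Zc : 'I_C -> finType) (J : {set 'I_C}) : Type :=
  forall c : {c : 'I_C | c \in J}, Zc (sval c).

Definition restrict (C : nat) (Zc : 'I_C -> finType) (J : {set 'I_C})
  (z : prodZ Zc) : subprod Zc J := fun c => z (sval c).

(* Main.v *)
Require Import Defs.
From HB Require Import structures.
From mathcomp Require Import all_boot all_order all_algebra.
From mathcomp Require Import reals.
Import Order.TTheory GRing.Theory Num.Theory.
Local Open Scope ring_scope.
 
Section H.
Variable R : realType.
Variable g : nat -> R.
Fixpoint hfun (n : nat) : nat -> R :=
  match n with
  | 0 => fun k => if k == 0%N then g 0 else 0
  | n'.+1 => fun k => if k == n'.+1 then g n'.+1 - \sum_(i < n'.+1) ('C(n'.+1, i))%:R * hfun n' i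
                      else hfun n' k
  end.
Definition hh k := hfun k k.
Lemma hfunE m k : (k <= m)%N -> hfun m k = hh k.
Proof.
elim: m => [|m IH] Hk; first by move: Hk; rewrite leqn0 => /eqP ->.
rewrite /=; case: eqP => [->|/eqP ne]; first by rewrite /hh /= eqxx.
by rewrite IH // -ltnS ltn_neqAle ne.
Qed.
Lemma hhE n : g n = \sum_(i < n.+1) ('C(n, i))%:R * hh i.
Proof.
case: n => [|n]; first by rewrite big_ord1 /hh /= mul1r.
rewrite big_ord_recr /= binn mul1r /hh /= eqxx.
rewrite [X in _ = X + _](eq_bigr (fun i : 'I_n.+1 => 'C(n.+1, i)%:R * hfun n i)).
  by rewrite addrC subrK.
by move=> i _; rewrite (@hfunE n i) // -ltnS.
Qed.
Lemma gsub (T : finType) (A : {set T}) :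
  g #|A| = \sum_(J : {set T} | J \subset A) hh #|J|.
Proof.
rewrite hhE.
transitivity (\sum_(J : {set T} | J \subset A) \sum_(i < #|A|.+1) (#|J| == i)%:R * hh i); last first.
  apply: eq_bigr => J JA.
  have HJ : (#|J| < #|A|.+1)%N by rewrite ltnS subset_leq_card.
  rewrite (bigD1 (Ordinal HJ)) //= eqxx mul1r big1 ?addr0 // => i ne.
  case: eqP => [E|]; last by rewrite mul0r.
  by move: ne; rewrite -val_eqE /= E eqxx.
rewrite exchange_big /=; apply: eq_bigr => i _.
rewrite -mulr_suml; congr (_ * _).
rewrite -cards_draws -sum1_card natr_sum [LHS]big_mkcond [RHS]big_mkcond /=.
apply: eq_bigr => J _.
rewrite !inE; by case: (J \subset A); case: (#|J| == i).
Qed.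
End H.

Definition matchJ (C : nat) (Zc : 'I_C -> finType) (J : {set 'I_C})
  (zt : prodZ Zc) (y : subprod Zc J) : bool :=
  [forall c : {c : 'I_C | c \in J}, zt (sval c) == y c].

Lemma matchJE (C : nat) (Zc : 'I_C -> finType) (J : {set 'I_C}) (zt z : prodZ Zc) :
  @matchJ C Zc J zt (@restrict C Zc J z) = (J \subset [set c | z c == zt c]).
Proof.
apply/forallP/subsetP => [H c cJ|H [c cJ]].
  by rewrite inE; have := H (exist _ c cJ); rewrite /restrict /= eq_sym.
by rewrite /restrict /=; have := H c cJ; rewrite inE eq_sym.
Qed.

Theorem theorem1 (R : realType) (C : nat) (Zc : 'I_C -> finType)
  (Ztrain : {set prodZ Zc}) (X : Type) (d : nat) (phi : X -> 'cV[R]_d)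
  (xrep : prodZ Zc -> X)
  (hcomp : comp_structured (feat_kernel phi) xrep)
  (a : prodZ Zc -> R) :
  exists fJ : forall J : {set 'I_C}, subprod Zc J -> R,
    forall (z : prodZ Zc) (x : X), x = xrep z ->
      kernel_model (feat_kernel phi) xrep Ztrain a x =
      \sum_(J in Conj z Ztrain) fJ J (@restrict C Zc J z).
Proof.
case: hcomp => g Hg.
exists (fun (J : {set 'I_C}) (y : subprod Zc J) => @hh R g #|J| * \sum_(zt in Ztrain | @matchJ C Zc J zt y) a zt).
move=> z x ->.
rewrite /kernel_model.
under eq_bigr => zt _ do rewrite Hg /nagree gsub big_distrr /=.
under eq_bigr => zt _ do rewrite big_mkcond.
rewrite exchange_big /=.
rewrite (bigID (mem (Conj z Ztrain))) /= [X in _ + X]big1 ?addr0.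
  apply: eq_bigr => J _.
  rewrite mulr_sumr [RHS]big_mkcondr /=.
  apply: eq_bigr => zt _; rewrite matchJE.
  by case: (J \subset _); rewrite // mulrC.
move=> J JC.
rewrite big_mkcond /=; apply: big1 => zt _.
case: ifP => // ztT; case: ifP => // JA.
exfalso; move/negP: JC; apply; rewrite inE.
apply/existsP; exists zt; rewrite ztT /=; apply/forallP => c; apply/implyP => cJ.
by have := subsetP JA c cJ; rewrite inE.
Qed.
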